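(* In any finite ELP and for any policy $\pi$, let $Q_{\max}$ be any optimal solution of the problem: maximize $\mathbb E_\pi[Q(S_T,A_T)]$ over $Q\in\mathcal Q$ subject to $Q(s,a)\le\mathcal BQ(s,a)$ for all $(s,a)$ (a maximin Q-function of $\mathcal L_\pi$). Then $Q_{\max}$ is an optimal Q-function: every $Q_{\max}$-greedy policy $\mu$ satisfies $J(\mu)=\max_{\pi'}J(\pi')$.
   Context: A finite ELP is $(\mathcal S,\mathcal A,P,R,\rho)$ with finite $\mathcal S,\mathcal A$, reward $R:\mathcal S\to\mathbb R$, transitions $P(s'|s,a)$, distribution $\rho$, and nonempty terminal set $\mathcal S_\bot$. Under a policy $\pi$, $S_0$ is a fixed terminal state, $A_t\sim\pi(\cdot|S_t)$, $S_{t+1}\sim P(\cdot|S_t,A_t)$, and $T=\inf\{t\ge1:S_t\in\mathcal S_\bot\}$. ELP conditions: $\mathbb E_\pi[T]<\infty$ for every $\pi$; $P(s'|s,a)=\rho(s')$ for all $s\in\mathcal S_\bot$, all $a,s'$; every state is reachable under some policy. $J(\pi)=\mathbb E_\pi[\sum_{t=1}^TR(S_t)]$. $\mathcal Q$ = all functions $\mathcal S\times\mathcal A\to\mathbb R$. $\mathcal BQ(s,a)=\sum_{s'}P(s'|s,a)\big(R(s')+\mathbf 1[s'\notin\mathcal S_\bot]\max_{a'}Q(s',a')\big)$. A $Q$-greedy policy is a policy with $\mu(a|s)>0$ only if $Q(s,a)=\max_{\bar a}Q(s,\bar a)$. *)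

(* Defs.v *)
From HB Require Import structures.
From mathcomp Require Import all_boot all_order all_algebra.
From mathcomp Require Import all_classical all_reals all_analysis.
Set Implicit Arguments. Unset Strict Implicit. Unset Printing Implicit Defensive.
Import Order.TTheory GRing.Theory Num.Theory.
Import numFieldNormedType.Exports.
Local Open Scope ring_scope.

Section ELP.
Context {R : realType} {S A : finType}.

(* A (stochastic, stationary) policy: pi s a = pi(a|s). *)
Definition is_policy (pi : S -> A -> R) : Prop :=
  (forall s a, 0 <= pi s a) /\ (forall s, \sum_(a : A) pi s a = 1).

(* Marginal law of S_t of the (non-stopped) process started at S_0 = s0. *)
Fixpoint state_dist (P : S -> A -> S -> R) (s0 : S) (pi : S -> A -> R)
    (t : nat) : S -> R :=
  match t with
  | 0 => fun s => (s == s0)%:R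
  | t'.+1 => fun s' => \sum_(s : S) state_dist P s0 pi t' s *
                        \sum_(a : A) pi s a * P s a s'
  end.

(* alive P Sbot s0 pi n s = Pr_pi(S_{n+1} = s, T >= n+1),
   where T = inf {t >= 1 : S_t \in Sbot}. *)
Fixpoint alive (P : S -> A -> S -> R) (Sbot : {set S}) (s0 : S)
    (pi : S -> A -> R) (n : nat) : S -> R :=
  match n with
  | 0 => fun s' => \sum_(a : A) pi s0 a * P s0 a s'
  | n'.+1 => fun s' => \sum_(s : S | s \notin Sbot) alive P Sbot s0 pi n' s *
                        \sum_(a : A) pi s a * P s a s'
  end.

(* E_pi[T] = sum_{t>=1} Pr(T >= t); its partial sums. *)
Definition ET_series P Sbot s0 pi : R ^nat :=
  series (fun n => \sum_(s : S) alive P Sbot s0 pi n s).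

(* J(pi) = E_pi[ sum_{t=1}^T R(S_t) ] = sum_{t>=1} E[R(S_t) 1{T >= t}]. *)
Definition J P (Rw : S -> R) Sbot s0 pi : R :=
  limn (series (fun n => \sum_(s : S) alive P Sbot s0 pi n s * Rw s)).

(* L_pi(Q) = E_pi[Q(S_T, A_T)] = sum_{t>=1} sum_{s in Sbot, a} Pr(S_t=s, T=t) pi(a|s) Q(s,a). *)
Definition Lobj P (Sbot : {set S}) s0 pi (Q : S -> A -> R) : R :=
  limn (series (fun n => \sum_(s in Sbot) alive P Sbot s0 pi n s *
                          \sum_(a : A) pi s a * Q s a)).

(* max_{a} Q(s,a) (A is nonempty in any ELP; the default 0 is never used there). *)
Definition maxQ (Q : S -> A -> R) (s : S) : R :=
  if [pick a : A] is Some a0 then \big[Num.max/Q s a0]_(a : A) Q s a else 0.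

Definition bellman P (Rw : S -> R) (Sbot : {set S}) (Q : S -> A -> R) (s : S) (a : A) : R :=
  \sum_(s' : S) P s a s' * (Rw s' + (s' \notin Sbot)%:R * maxQ Q s').

Definition is_greedy (Q : S -> A -> R) (mu : S -> A -> R) : Prop :=
  is_policy mu /\ forall s a, 0 < mu s a -> Q s a = maxQ Q s.

(* Finite ELP conditions (S_0 = s0 is the fixed terminal start state). *)
Definition is_ELP (P : S -> A -> S -> R) (rho : S -> R) (Sbot : {set S}) (s0 : S) : Prop :=
  (forall s a s', 0 <= P s a s') /\
  (forall s a, \sum_(s' : S) P s a s' = 1) /\
  ((forall s, 0 <= rho s) /\ \sum_(s : S) rho s = 1) /\
  s0 \in Sbot /\
  (forall s a s', s \in Sbot -> P s a s' = rho s') /\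
  (forall pi, is_policy pi -> cvgn (ET_series P Sbot s0 pi)) /\
  (forall s, exists pi, is_policy pi /\ exists t, 0 < state_dist P s0 pi t s).

Definition is_maximin P Rw Sbot s0 pi (Qm : S -> A -> R) : Prop :=
  (forall s a, Qm s a <= bellman P Rw Sbot Qm s a) /\
  (forall Q : S -> A -> R, (forall s a, Q s a <= bellman P Rw Sbot Q s a) ->
      Lobj P Sbot s0 pi Q <= Lobj P Sbot s0 pi Qm).

End ELP.

(* Main.v *)
Require Import Defs.
From HB Require Import structures.
From mathcomp Require Import all_boot all_order all_algebra.
From mathcomp Require Import all_classical all_reals all_analysis.
From mathcomp Require Import ring.
Import Order.TTheory GRing.Theory Num.Theory.
Import numFieldNormedType.Exports.
Local Open Scope classical_set_scope.
Local Open Scope ring_scope.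

Section Aux.
Context {R : realType} {S A : finType}.
Context (P : S -> A -> S -> R) (Rw : S -> R) (rho : S -> R) (Sbot : {set S}) (s0 : S).
Hypothesis P0 : forall s a s', 0 <= P s a s'.
Hypothesis P1 : forall s a, \sum_(s' : S) P s a s' = 1.
Hypothesis Pterm : forall s a s', s \in Sbot -> P s a s' = rho s'.
Hypothesis s0bot : s0 \in Sbot.

Lemma maxQ_ge (Q : S -> A -> R) s a : Q s a <= maxQ Q s.
Proof.
rewrite /maxQ; case: pickP => [a0 _|/(_ a)//].
exact: le_bigmax.
Qed.

Lemma maxQ_le (a1 : A) (Q : S -> A -> R) s c : (forall a, Q s a <= c) -> maxQ Q s <= c.
Proof.
move=> H; rewrite /maxQ; case: pickP => [a0 _|/(_ a1)//].
by apply: bigmax_le.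
Qed.

Lemma maxQ_mono (Q1 Q2 : S -> A -> R) (a1 : A) : (forall s a, Q1 s a <= Q2 s a) ->
  forall s, maxQ Q1 s <= maxQ Q2 s.
Proof.
move=> H s; apply: (maxQ_le a1) => a; apply: le_trans (H s a) _; exact: maxQ_ge.
Qed.

Definition avg (sg : S -> A -> R) (X : S -> A -> R) s := \sum_(a : A) sg s a * X s a.

Lemma avg_le_max sg X s : is_policy sg -> avg sg X s <= maxQ X s.
Proof.
move=> [sg0 sg1]; rewrite /avg.
apply: le_trans (_ : \sum_a sg s a * maxQ X s <= _).
  apply: ler_sum => a _; apply: ler_wpM2l => //; exact: maxQ_ge.
by rewrite -mulr_suml sg1 mul1r.
Qed.

Lemma avg_mono sg X Y s : is_policy sg -> (forall a, X s a <= Y s a) -> avg sg X s <= avg sg Y s.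
Proof.
move=> [sg0 sg1] H; apply: ler_sum => a _; exact: ler_wpM2l.
Qed.

Lemma avg_cst sg X s c : is_policy sg -> (forall a, X s a = c) -> avg sg X s = c.
Proof.
move=> [sg0 sg1] H; rewrite /avg (eq_bigr (fun a => sg s a * c)); last by move=> a _; rewrite H.
by rewrite -mulr_suml sg1 mul1r.
Qed.

Definition Bs (sg : S -> A -> R) (X : S -> A -> R) s a : R :=
  \sum_(s' : S) P s a s' * (Rw s' + (s' \notin Sbot)%:R * avg sg X s').

Lemma Bs_le_bellman sg X s a : is_policy sg -> Bs sg X s a <= bellman P Rw Sbot X s a.
Proof.
move=> Hsg; apply: ler_sum => s' _; apply: ler_wpM2l => //; rewrite lerD2l.
apply: ler_wpM2l; first by case: (s' \notin Sbot).
exact: avg_le_max.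
Qed.

Lemma Bs_mono sg X Y : is_policy sg -> (forall s a, X s a <= Y s a) ->
  forall s a, Bs sg X s a <= Bs sg Y s a.
Proof.
move=> Hsg H s a; apply: ler_sum => s' _; apply: ler_wpM2l => //; rewrite lerD2l.
apply: ler_wpM2l; first by case: (s' \notin Sbot).
exact: avg_mono.
Qed.

Lemma bellman_mono X Y (a1 : A) : (forall s a, X s a <= Y s a) ->
  forall s a, bellman P Rw Sbot X s a <= bellman P Rw Sbot Y s a.
Proof.
move=> H s a; apply: ler_sum => s' _; apply: ler_wpM2l => //; rewrite lerD2l.
apply: ler_wpM2l; first by case: (s' \notin Sbot).
exact: maxQ_mono.
Qed.

Lemma greedy_avg Q mu : is_greedy Q mu -> forall s, avg mu Q s = maxQ Q s.
Proof.
move=> [[mu0 mu1] Hg] s; rewrite /avg.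
rewrite (eq_bigr (fun a => mu s a * maxQ Q s)); first by rewrite -mulr_suml mu1 mul1r.
move=> a _; have := mu0 s a; rewrite le0r => /orP[/eqP->|/Hg->]; by rewrite ?mul0r.
Qed.

Lemma greedy_bellman Q mu : is_greedy Q mu -> forall s a, Bs mu Q s a = bellman P Rw Sbot Q s a.
Proof.
move=> Hg s a; apply: eq_bigr => s' _; by rewrite greedy_avg.
Qed.

Notation alpha sg := (alive P Sbot s0 sg).
Definition tot sg n := \sum_(s : S) alpha sg n s.

Lemma alive_ge0 sg n s : is_policy sg -> 0 <= alpha sg n s.
Proof.
move=> [sg0 _]; elim: n s => [|n IH] s /=.
  by apply: sumr_ge0 => a _; apply: mulr_ge0.
apply: sumr_ge0 => s' _; apply: mulr_ge0 => //; apply: sumr_ge0 => a _; exact: mulr_ge0.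
Qed.

Lemma tot0 sg : is_policy sg -> tot sg 0 = 1.
Proof.
move=> [_ sg1]; rewrite /tot /= exchange_big /=.
rewrite (eq_bigr (fun a => sg s0 a)) ?sg1 // => a _.
by rewrite -mulr_sumr P1 mulr1.
Qed.

Lemma totS sg n : is_policy sg -> tot sg n.+1 = \sum_(s | s \notin Sbot) alpha sg n s.
Proof.
move=> [_ sg1]; rewrite /tot /= exchange_big /=; apply: eq_bigr => s _.
rewrite -mulr_sumr exchange_big /=.
rewrite (eq_bigr (fun a => sg s a)) ?sg1 ?mulr1 // => a _.
by rewrite -mulr_sumr P1 mulr1.
Qed.

Lemma beta_eq sg n : is_policy sg ->
  \sum_(s in Sbot) alpha sg n s = tot sg n - tot sg n.+1.
Proof.
move=> Hsg; by rewrite totS // /tot [in RHS](bigID (fun s => s \in Sbot)) /= addrK.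
Qed.


Lemma cvg_bigsum (I : Type) (r : seq I) (D : pred I) (u : I -> nat -> R) (l : I -> R) :
  (forall i, u i n @[n --> \oo] --> l i) ->
  (\sum_(i <- r | D i) u i n) @[n --> \oo] --> \sum_(i <- r | D i) l i.
Proof.
move=> H; elim: r => [|i r IH].
  rewrite big_nil; under eq_cvg do rewrite big_nil; exact: cvg_cst.
rewrite big_cons; under eq_cvg do rewrite big_cons.
case: ifPn => Di; last exact: IH.
exact: cvgD.
Qed.

Hypothesis HET : forall pi, is_policy pi -> cvgn (ET_series P Sbot s0 pi).

Definition occ sg s := limn (series (fun n => alpha sg n s)).

Lemma tot_ge0 sg n : is_policy sg -> 0 <= tot sg n.
Proof. by move=> H; apply: sumr_ge0 => s _; exact: alive_ge0. Qed.

Lemma occ_cvg sg s : is_policy sg -> series (fun n => alpha sg n s) @ \oo --> occ sg s.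
Proof.
move=> H; apply: (@series_le_cvg _ _ (tot sg)).
- by move=> n; exact: alive_ge0.
- by move=> n; exact: tot_ge0.
- move=> n; rewrite /tot (bigD1 s) //= lerDl; apply: sumr_ge0 => s' _; exact: alive_ge0.
- exact: HET.
Qed.

Lemma ser_cvg sg (w : S -> R) (D : pred S) : is_policy sg ->
  series (fun n => \sum_(s | D s) alpha sg n s * w s) @ \oo --> \sum_(s | D s) occ sg s * w s.
Proof.
move=> H.
have -> : series (fun n => \sum_(s | D s) alpha sg n s * w s) =
   (fun N => \sum_(s | D s) series (fun n => alpha sg n s) N * w s).
  apply: funext => N; rewrite /series /= exchange_big /=.
  by apply: eq_bigr => s _; rewrite mulr_suml.
apply: (@cvg_bigsum _ _ _ (fun s N => series (fun n => alpha sg n s) N * w s)) => s.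
apply: cvgMl; exact: occ_cvg.
Qed.

Lemma J_eq sg : is_policy sg -> J P Rw Sbot s0 sg = \sum_(s : S) occ sg s * Rw s.
Proof. move=> H; apply: cvg_lim => //. have := (ser_cvg sg Rw xpredT H). move=> X. exact X. Qed.

Lemma Lobj_eq sg Q : is_policy sg -> Lobj P Sbot s0 sg Q = \sum_(s in Sbot) occ sg s * avg sg Q s.
Proof. move=> H; apply: cvg_lim => //; exact: (ser_cvg sg (avg sg Q) (fun s => s \in Sbot) H). Qed.

Lemma occ_ge0 sg s : is_policy sg -> 0 <= occ sg s.
Proof.
move=> H; apply: limr_ge; first exact: cvgP (occ_cvg sg s H).
apply: nearW => n; apply: sumr_ge0 => k _; exact: alive_ge0.
Qed.

Lemma occ_sum sg : is_policy sg -> \sum_(s in Sbot) occ sg s = 1.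
Proof.
move=> H.
have E : series (fun n => \sum_(s in Sbot) alpha sg n s * 1) = (fun N => 1 - tot sg N).
  apply: funext; elim => [|N IH].
    by rewrite /series /= big_geq // tot0 // subrr.
  rewrite seriesSr IH /=.
  under eq_bigr do rewrite mulr1.
  by rewrite beta_eq // addrA subrK.
have C1 := ser_cvg sg (fun _ => 1) (fun s => s \in Sbot) H.
rewrite E in C1.
have C2 : (fun N => 1 - tot sg N) @ \oo --> (1 - 0 : R).
  apply: cvgB; first exact: cvg_cst.
  apply: cvg_series_cvg_0; exact: HET.
rewrite subr0 in C2.
have := cvg_unique _ C1 C2.
under eq_bigr do rewrite mulr1.
by move=> ->.
Qed.

Lemma ser0 (u : R ^nat) : series u 0 = 0.
Proof. by rewrite /series /= big_geq. Qed.

Lemma alpha0 sg s : is_policy sg -> alpha sg 0 s = rho s.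
Proof.
move=> [_ sg1] /=; rewrite (eq_bigr (fun a => sg s0 a * rho s)).
  by rewrite -mulr_suml sg1 mul1r.
by move=> a _; rewrite Pterm.
Qed.

Lemma split_g (f : S -> R) sg X :
  \sum_(s' : S) f s' * (Rw s' + (s' \notin Sbot)%:R * avg sg X s') =
  \sum_(s' : S) f s' * Rw s' + \sum_(s' | s' \notin Sbot) f s' * avg sg X s'.
Proof.
under eq_bigr do rewrite mulrDr.
rewrite big_split /=; congr (_ + _).
rewrite [RHS]big_mkcond; apply: eq_bigr => s' _.
by case: (s' \notin Sbot); rewrite /= ?mul1r ?mul0r ?mulr0.
Qed.

Lemma step_form sg X n :
  \sum_(s'' : S) alpha sg n.+1 s'' * (Rw s'' + (s'' \notin Sbot)%:R * avg sg X s'') =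
  \sum_(s' | s' \notin Sbot) alpha sg n s' * avg sg (Bs sg X) s'.
Proof.
rewrite /= /avg /Bs.
set g := fun s'' => Rw s'' + (s'' \notin Sbot)%:R * \sum_a sg s'' a * X s'' a.
rewrite (eq_bigr (fun s'' => \sum_(s' | s' \notin Sbot) \sum_a
   alpha sg n s' * sg s' a * P s' a s'' * g s'')); last first.
  move=> s'' _; rewrite big_distrl /=; apply: eq_bigr => s' _.
  rewrite mulr_sumr mulr_suml; apply: eq_bigr => a _; by rewrite /g !mulrA.
rewrite exchange_big /=; apply: eq_bigr => s' _.
rewrite exchange_big mulr_sumr; apply: eq_bigr => a _ /=.
rewrite mulr_sumr mulr_sumr; apply: eq_bigr => s'' _; by rewrite /g !mulrA.
Qed.

Lemma iter_formula sg X n s a : is_policy sg -> s \in Sbot ->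
  iter n.+1 (Bs sg) X s a =
  series (fun k => \sum_(s' : S) alpha sg k s' * Rw s') n.+1 +
  \sum_(s' | s' \notin Sbot) alpha sg n s' * avg sg X s'.
Proof.
move=> H Hs; elim: n X => [|n IH] X.
  rewrite [iter _ _ _]/= seriesSr ser0 add0r /Bs.
  under eq_bigr do rewrite (Pterm _ _ _ Hs).
  rewrite split_g; congr (_ + _); [apply: eq_bigr|apply: eq_bigr] => s' _;
    by rewrite alpha0.
rewrite iterSr IH [in RHS]seriesSr -addrA; congr (_ + _).
by rewrite -step_form split_g.
Qed.

Lemma iter_cvg sg X s a : is_policy sg -> s \in Sbot ->
  (fun n => iter n.+1 (Bs sg) X s a) @ \oo --> J P Rw Sbot s0 sg.
Proof.
move=> H Hs.
under eq_cvg do rewrite iter_formula //.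
rewrite -[J _ _ _ _ _]addr0; apply: cvgD.
  have := cvg_shiftS (series (fun k => \sum_(s' : S) alpha sg k s' * Rw s')) (nbhs (J P Rw Sbot s0 sg)).
  move=> ->; rewrite J_eq //; exact: (ser_cvg sg Rw xpredT H).
have C : (\sum_(s' | s' \notin Sbot) alpha sg n s' * avg sg X s') @[n --> \oo] -->
   \sum_(s' | s' \notin Sbot) 0 * avg sg X s'.
  apply: (@cvg_bigsum _ _ _ (fun s' n => alpha sg n s' * avg sg X s')) => s'.
  apply: cvgMl; apply: cvg_series_cvg_0; exact: cvgP (occ_cvg sg s' H).
by rewrite big1 in C => // s' _; rewrite mul0r.
Qed.

Lemma main_aux (a1 : A) pi (Hpi : is_policy pi) Qmax
  (Hmax : is_maximin P Rw Sbot s0 pi Qmax) mu (Hmu : is_greedy Qmax mu)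
  pi' (Hpi' : is_policy pi') : J P Rw Sbot s0 pi' <= J P Rw Sbot s0 mu.
Proof.
have Hmu' : is_policy mu := Hmu.1.
have Q_le_iter : forall n s a, Qmax s a <= iter n (Bs mu) Qmax s a.
  elim => [|n IH] s a; first by rewrite /= lexx.
  rewrite iterS; apply: le_trans (Hmax.1 s a) _; rewrite -(greedy_bellman _ _ Hmu).
  exact: Bs_mono.
have QJ : forall s a, s \in Sbot -> Qmax s a <= J P Rw Sbot s0 mu.
  move=> s a Hs; have C := iter_cvg mu Qmax s a Hmu' Hs.
  have <- := cvg_lim _ C; last by []. apply: (limr_ge (cvgP _ C)).
  apply: nearW => n; exact: Q_le_iter.
have LJ : Lobj P Sbot s0 pi Qmax <= J P Rw Sbot s0 mu.
  rewrite Lobj_eq // -[J _ _ _ _ mu]mul1r -(occ_sum pi Hpi) mulr_suml.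
  apply: ler_sum => s Hs; apply: ler_wpM2l; first exact: occ_ge0.
  rewrite -(@avg_cst pi (fun _ _ => J P Rw Sbot s0 mu) s (J P Rw Sbot s0 mu) Hpi (fun _ => erefl)).
  apply: avg_mono => // a; exact: QJ.
apply: le_trans LJ.
pose Y n := iter n (bellman P Rw Sbot) Qmax.
have Ymono : forall n s a, Y n s a <= Y n.+1 s a.
  elim => [|n IH] s a; first exact: Hmax.1.
  exact: (bellman_mono _ _ a1 IH).
have Yge : forall n s a, iter n (Bs pi') Qmax s a <= Y n s a.
  elim => [|n IH] s a; first by rewrite /= lexx.
  rewrite !iterS; apply: le_trans (Bs_mono _ _ _ Hpi' IH s a) _; exact: Bs_le_bellman.
have cn_le : forall n, iter n.+1 (Bs pi') Qmax s0 a1 <= Lobj P Sbot s0 pi Qmax.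
  move=> n; apply: le_trans (Hmax.2 (Y n.+1) (fun s a => Ymono n.+1 s a)).
  rewrite Lobj_eq // -[iter _ _ _ s0 a1]mul1r -(occ_sum pi Hpi) mulr_suml.
  apply: ler_sum => s Hs; apply: ler_wpM2l; first exact: occ_ge0.
  have E : forall a, iter n.+1 (Bs pi') Qmax s a = iter n.+1 (Bs pi') Qmax s0 a1.
    by move=> a; rewrite !iter_formula.
  rewrite -(@avg_cst pi (iter n.+1 (Bs pi') Qmax) s _ Hpi E).
  apply: avg_mono => // a; exact: Yge.
have C := iter_cvg pi' Qmax s0 a1 Hpi' s0bot.
have <- := cvg_lim _ C; last by []. apply: (limr_le (cvgP _ C)).
apply: nearW => n; exact: cn_le.
Qed.

End Aux.

Theorem mainTheorem10 (R : realType) (S A : finType)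
  (P : S -> A -> S -> R) (Rw : S -> R) (rho : S -> R) (Sbot : {set S}) (s0 : S)
  (HELP : is_ELP P rho Sbot s0)
  (pi : S -> A -> R) (Hpi : is_policy pi)
  (Qmax : S -> A -> R) (Hmax : is_maximin P Rw Sbot s0 pi Qmax)
  (mu : S -> A -> R) (Hmu : is_greedy Qmax mu) :
  forall pi' : S -> A -> R, is_policy pi' ->
    J P Rw Sbot s0 pi' <= J P Rw Sbot s0 mu.
Proof.
move=> pi' Hpi'.
case: HELP => P0 [P1 [_ [s0bot [Pterm [HET _]]]]].
case: (pickP (fun _ : A => true)) => [a1 _|Hn].
  have := @main_aux _ _ _ P Rw rho Sbot s0 P0 P1 Pterm s0bot HET.
  by move=> H; exact: (H a1 pi Hpi Qmax Hmax mu Hmu pi' Hpi').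
exfalso; move: Hpi => [_ Hs]; move: (Hs s0).
rewrite big_pred0 // => /esym/eqP; by rewrite oner_eq0.
Qed.
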